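(* Let $G$ be a finite graph and let $a\ge 0$, $b\ge 1$ be integers. Then $\phi^a_b(M(G))\ge \phi^{a+b}_{2b}(G)$. Moreover, for every positive integer $t$, $\phi^0_2(M^t(G))\ge \phi^{2^{t+1}-2}_{2^{t+1}}(G)$.
   Context: For $G$ with $V(G)=\{v_1,\dots,v_n\}$, the Mycielskian $M(G)$ has vertex set $\{v_1,\dots,v_n\}\cup\{v'_1,\dots,v'_n\}\cup\{z\}$ and edge set $E(G)\cup\{v'_iv_j: v_iv_j\in E(G)\}\cup\{zv'_i: 1\le i\le n\}$. $M^1(G)=M(G)$ and $M^t(G)=M(M^{t-1}(G))$ for $t\ge2$. An independent set $F$ of $G$ is free if it is contained in at least two distinct maximal independent sets; an edge $uv$ supports $F$ if $F\cap(N(u)\cup N(v))=\emptyset$. For integers $a\ge0,b\ge1$, $\phi^a_b(G)$ is the minimum $t$ such that $V(G)$ is partitioned into independent sets $V_1,\dots,V_t$ with $V_1,\dots,V_{t-a}$ free, and there are edges $e_1,\dots,e_{t-a}$ (not necessarily distinct) with $e_i$ supporting $V_i$ and every vertex incident with at most $b$ of $e_1,\dots,e_{t-a}$; $\phi^a_b(G)=\infty$ if no such $t$ exists. *)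

(* Defs.v *)
From mathcomp Require Import all_boot.
From Stdlib Require Import ClassicalEpsilon.
Set Implicit Arguments. Unset Strict Implicit. Unset Printing Implicit Defensive.

Record graph := Graph {
  vert :> finType;
  adj : rel vert;
  adj_sym : symmetric adj;
  adj_irr : irreflexive adj }.

(* Mycielskian: None = z, Some (inl v) = v, Some (inr v) = v'. *)
Definition myc_adj (G : graph) : rel (option (vert G + vert G)) :=
  fun x y =>
    match x, y with
    | Some (inl u), Some (inl v) => adj u v
    | Some (inl u), Some (inr v) => adj u v
    | Some (inr u), Some (inl v) => adj u v
    | Some (inr _), None => true
    | None, Some (inr _) => true
    | _, _ => false
    end.

Lemma myc_adj_sym G : symmetric (@myc_adj G).
Proof.
by move=> [[u|u]|] [[v|v]|] //=; rewrite adj_sym.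
Qed.

Lemma myc_adj_irr G : irreflexive (@myc_adj G).
Proof. by move=> [[u|u]|] //=; rewrite adj_irr. Qed.

Definition Myc (G : graph) : graph :=
  @Graph (option (vert G + vert G))%type (@myc_adj G) (@myc_adj_sym G) (@myc_adj_irr G).

Definition Myc_iter (t : nat) (G : graph) : graph := iter t Myc G.

Section Phi.
Variable G : graph.
Local Notation V := (vert G).

Definition nbhd (u : V) : {set V} := [set w | adj u w].

Definition indep (F : {set V}) : bool :=
  [forall u in F, forall v in F, ~~ adj u v].

Definition free (F : {set V}) : bool :=
  indep F &&
  [exists S1 : {set V}, exists S2 : {set V},
     [&& S1 != S2, maxset indep S1, maxset indep S2, F \subset S1 & F \subset S2]].

Definition supports (u v : V) (F : {set V}) : bool :=
  adj u v && [disjoint F & nbhd u :|: nbhd v].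

(* t is admissible for phi^a_b: a partition V_0,...,V_{t-1} (classes may be
   empty) given by f, into independent sets, the first t-a of them free and
   supported by edges g i, with every vertex incident to at most b of these
   edges (counted with multiplicity). *)
Definition phi_feasible (a b t : nat) : bool :=
  [exists f : {ffun V -> 'I_t}, exists g : {ffun 'I_t -> (V * V)%type},
    [&& [forall i : 'I_t, indep [set x | f x == i]],
        [forall i : 'I_t, (i < t - a) ==>
            (free [set x | f x == i] && supports (g i).1 (g i).2 [set x | f x == i])]
      & [forall v : V,
           #|[set i : 'I_t | (i < t - a) && (((g i).1 == v) || ((g i).2 == v))]| <= b]]].

(* phi^a_b(G) as an extended natural: None = infinity *)
Definition phi (a b : nat) : option nat :=
  match excluded_middle_informative (exists t, phi_feasible a b t) with
  | left H => Some (ex_minn H)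
  | right _ => None
  end.

End Phi.

Definition le_ext (x y : option nat) : Prop :=
  match x, y with
  | _, None => True
  | None, Some _ => False
  | Some m, Some n => m <= n
  end.

(* Main.v *)
Require Import Defs.
From mathcomp Require Import all_boot.
From Stdlib Require Import ClassicalEpsilon.
Set Implicit Arguments. Unset Strict Implicit. Unset Printing Implicit Defensive.

Lemma feasible_flex (H : graph) a b t (f : {ffun H -> 'I_t}) (g : 'I_t -> (H * H)%type) (P : {set 'I_t}) :
  t - a <= #|P| ->
  (forall i, indep [set x | f x == i]) ->
  (forall i, i \in P -> free [set x | f x == i] && supports (g i).1 (g i).2 [set x | f x == i]) ->
  (forall v, #|[set i in P | ((g i).1 == v) || ((g i).2 == v)]| <= b) ->
  phi_feasible H a b t.
Proof.
move=> hP hind hfree hload.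
pose s := enum P ++ enum (~: P).
have ss : size s = t by rewrite size_cat -!cardE cardsC card_ord.
have us : uniq s.
  rewrite cat_uniq !enum_uniq /= andbT; apply/hasPn => x.
  by rewrite !mem_enum inE.
pose sig := fun j : 'I_t => nth j s j.
have sig_inj : injective sig.
  move=> i j; rewrite /sig (set_nth_default i j) ?ss ?ltn_ord // => /eqP.
  by rewrite nth_uniq ?ss ?ltn_ord // => /eqP; apply: val_inj.
have sigP : forall j : 'I_t, j < #|P| -> sig j \in P.
  move=> j hj; rewrite /sig nth_cat -cardE hj -mem_enum mem_nth //.
  by rewrite -cardE.
pose f' := [ffun x => invF sig_inj (f x)].
pose g' := [ffun j => g (sig j)].
have hclass : forall j, [set x | f' x == j] = [set x | f x == sig j].
  move=> j; apply/setP => x; rewrite !inE ffunE; apply/eqP/eqP => [<-|->].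
    by rewrite f_invF.
  by rewrite invF_f.
apply/existsP; exists f'; apply/existsP; exists g'; apply/and3P; split.
- by apply/forallP => j; rewrite hclass.
- apply/forallP => j; apply/implyP => hj; rewrite hclass ffunE; apply: hfree.
  by apply: sigP; apply: leq_trans hj hP.
- apply/forallP => v; apply: leq_trans (hload v).
  rewrite -(card_imset _ sig_inj); apply: subset_leq_card; apply/subsetP => y /imsetP [j].
  rewrite inE ffunE => /andP [hj he] ->; rewrite inE he andbT.
  by apply: sigP; apply: leq_trans hj hP.
Qed.

Lemma phi_le (H : graph) a b t : phi_feasible H a b t -> le_ext (phi H a b) (Some t).
Proof.
rewrite /phi; case: excluded_middle_informative => [ex|nex] ft /=.
  by case: ex_minnP => m _; apply.
by exfalso; apply: nex; exists t.
Qed.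

Lemma phi_some (H : graph) a b m : phi H a b = Some m -> phi_feasible H a b m.
Proof.
rewrite /phi; case: excluded_middle_informative => [ex|nex] //= [<-].
by case: ex_minnP.
Qed.

Lemma le_ext_trans x y z : le_ext x y -> le_ext y z -> le_ext x z.
Proof. by case: x => [x|]; case: y => [y|]; case: z => [z|] //=; apply: leq_trans. Qed.

Lemma supp_free (H : graph) (F : {set H}) u v : indep F -> supports u v F -> free F.
Proof.
move=> hi /andP [huv hd]; rewrite /free hi /=.
have indU : forall w, [disjoint F & nbhd w] -> indep (w |: F).
  move=> w hw; apply/forallP => x; apply/implyP; rewrite !inE => hx.
  apply/forallP => y; apply/implyP; rewrite !inE => hy.
  case/orP: hx => [/eqP->|hx]; case/orP: hy => [/eqP->|hy].
  - by rewrite adj_irr.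
  - by apply/negP => ha; move: (disjointFr hw hy); rewrite inE ha.
  - by apply/negP => ha; move: (disjointFr hw hx); rewrite inE adj_sym ha.
  - by move/forallP: hi => /(_ x); rewrite hx => /forallP /(_ y); rewrite hy.
have hu : [disjoint F & nbhd u].
  by apply: disjointWr hd; apply/subsetP => x hx; rewrite inE hx.
have hv : [disjoint F & nbhd v].
  by apply: disjointWr hd; apply/subsetP => x hx; rewrite inE hx orbT.
case: (maxset_exists (indU _ hu)) => S1 m1 s1.
case: (maxset_exists (indU _ hv)) => S2 m2 s2.
apply/existsP; exists S1; apply/existsP; exists S2; apply/and5P; split => //.
2: by apply: subset_trans s1; apply: subsetUr.
2: by apply: subset_trans s2; apply: subsetUr.
apply/eqP => e; subst S2.
have u1 : u \in S1 by apply: (subsetP s1); rewrite !inE eqxx.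
have v1 : v \in S1 by apply: (subsetP s2); rewrite !inE eqxx.
move/maxsetP: m1 => [/forallP /(_ u) /implyP /(_ u1) /forallP /(_ v) /implyP /(_ v1)].
by rewrite huv.
Qed.

Lemma myc_transfer (G : graph) a b t :
  phi_feasible (Myc G) a b t -> le_ext (phi G (a + b) (2 * b)) (Some t).
Proof.
case: (pickP (predT : pred G)) => [x0 _|hnone]; last first.
  move=> _.
  have hx : forall x : G, False by move=> x; move: (hnone x).
  have h0 : 'I_0 -> False by case.
  apply: (@le_ext_trans _ (Some 0)) => //; apply: phi_le.
  apply/existsP; exists [ffun x => match hx x with end].
  apply/existsP; exists [ffun i => match h0 i with end].
  by apply/and3P; split; apply/forallP => i; [case: (h0 i)|case: (h0 i)|case: (hx i)].
pose proj (x : Myc G) : G :=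
  match x with Some (inl u) => u | Some (inr u) => u | None => x0 end.
move/existsP => [f /existsP [g /and3P [hind hfr hload]]].
apply: phi_le.
pose P := [set i : 'I_t | [&& i < t - a, (g i).1 != None & (g i).2 != None]].
pose f' := [ffun x : G => f (Some (inl x))].
have indG : forall i, indep [set x | f' x == i].
  move=> i; move: (forallP hind i); rewrite /indep => /forallP hI.
  apply/forallP => u; apply/implyP; rewrite inE ffunE => hu.
  apply/forallP => v; apply/implyP; rewrite inE ffunE => hv.
  move: (hI (Some (inl u))); rewrite inE hu => /forallP /(_ (Some (inl v))).
  by rewrite inE hv.
apply: (@feasible_flex G (a + b) (2 * b) t f' (fun i => (proj (g i).1, proj (g i).2)) P).
- pose Q := [set i : 'I_t | i < t - a].
  pose Z := [set i : 'I_t | (i < t - a) && (((g i).1 == None) || ((g i).2 == None))].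
  have hZ : #|Z| <= b by exact: (forallP hload None).
  have le : t - a <= t := leq_subr a t.
  have hQ : t - a <= #|Q|.
    have winj : injective (widen_ord le) by move=> i j /(congr1 val) => /= /val_inj.
    rewrite -{1}(card_ord (t - a)) -(card_imset _ winj); apply: subset_leq_card.
    by apply/subsetP => y /imsetP [j _ ->]; rewrite inE /= ltn_ord.
  have -> : P = Q :\: Z.
    apply/setP => i; rewrite !inE; case: (i < t - a) => //=.
    by rewrite andbT negb_or.
  rewrite cardsD subnDA; apply: leq_sub => //.
  by apply: leq_trans hZ; apply: subset_leq_card; apply: subsetIr.
- exact: indG.
- move=> i; rewrite inE => /and3P [hi h1 h2].
  move: (implyP (forallP hfr i) hi) => /andP [_ /andP [hadj hdisj]].
  suff hs : supports (proj (g i).1) (proj (g i).2) [set x | f' x == i].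
    by rewrite hs (supp_free (indG i) hs).
  move: h1 h2 hadj hdisj; rewrite /proj.
  case: (g i).1 => [[u1|u1]|] //; case: (g i).2 => [[u2|u2]|] // _ _ hadj hdisj;
  (apply/andP; split; [by [] | ]);
  rewrite disjoints_subset; apply/subsetP => x; rewrite !inE ffunE => hx;
  have := disjointFr hdisj (x := Some (inl x)); rewrite !inE hx => /(_ isT);
  by move=> /= ->.
- move=> v.
  pose A := [set i : 'I_t | (i < t - a) && (((g i).1 == Some (inl v)) || ((g i).2 == Some (inl v)))].
  pose B := [set i : 'I_t | (i < t - a) && (((g i).1 == Some (inr v)) || ((g i).2 == Some (inr v)))].
  apply: (@leq_trans #|A :|: B|).
    apply: subset_leq_card; apply/subsetP => i; rewrite !inE => /andP [/and3P [hi h1 h2] he].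
    rewrite hi /=; move: h1 h2 he; rewrite /proj.
    by case: (g i).1 => [[u|u]|] //; case: (g i).2 => [[w|w]|] // _ _ /=;
      case/orP => /eqP ->; rewrite !eqxx ?orbT.
  rewrite cardsU mul2n -addnn; apply: leq_trans (leq_subr _ _) _.
  by apply: leq_add; [exact: (forallP hload (Some (inl v))) | exact: (forallP hload (Some (inr v)))].
Qed.

Lemma part1 (G : graph) a b : le_ext (phi G (a + b) (2 * b)) (phi (Myc G) a b).
Proof.
case E: (phi (Myc G) a b) => [m|]; last by case: (phi G _ _).
exact: myc_transfer (phi_some E).
Qed.

Lemma le_ext_refl x : le_ext x x.
Proof. by case: x => [x|] /=. Qed.

Lemma iter_bound k (H : graph) :
  le_ext (phi H (2 ^ k.+1 - 2) (2 ^ k.+1)) (phi (iter k Myc H) 0 2).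
Proof.
elim: k H => [|k IH] H; first exact: le_ext_refl.
rewrite iterSr; apply: le_ext_trans (IH (Myc H)).
have h2 : 2 <= 2 ^ k.+1 by rewrite expnS leq_pmulr ?expn_gt0.
have := part1 H (2 ^ k.+1 - 2) (2 ^ k.+1).
have -> : 2 ^ k.+1 - 2 + 2 ^ k.+1 = 2 ^ k.+2 - 2.
  by rewrite addnC addnBA // [2 ^ k.+2]expnS mul2n -addnn.
by rewrite -expnS.
Qed.

Theorem mainTheorem8 (G : graph) (a b : nat) :
  1 <= b ->
  le_ext (phi G (a + b) (2 * b)) (phi (Myc G) a b) /\
  (forall t : nat, 1 <= t ->
     le_ext (phi G (2 ^ t.+1 - 2) (2 ^ t.+1)) (phi (Myc_iter t G) 0 2)).
Proof.
move=> _; split; first exact: part1.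
by move=> t _; exact: iter_bound.
Qed.
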